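(* Consider the toric code setting and the Liouvillian $\mathcal{L}$ described in the context. Let $\ket{\Psi}\in(\mathbb{C}^2)^{\otimes 2}$, let $\rho_{\mathcal{D}}$ be an arbitrary state on the qubits of $\mathcal{D}$, and let $$\rho_0=|\Psi\rangle\langle\Psi|_{\mathcal{A}}\otimes|+\rangle\langle+|^{\otimes 2(L-1)}_{\mathcal{B}\mathcal{B}'}\otimes|0\rangle\langle 0|^{\otimes 2(L-1)}_{\mathcal{C}\mathcal{C}'}\otimes\rho_{\mathcal{D}}.$$ Then for every two-qubit Pauli operator $P=P_1\otimes P_2$, $P_j\in\{I,X,Y,Z\}$, and every $t\ge 0$, $$\mathrm{tr}\big(\overline{P}\,e^{t\mathcal{L}}(\rho_0)\big)=\langle\Psi|P|\Psi\rangle .$$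
   Context: Lattice: periodic $L\times L$, vertices $(x,y)\in\mathbb{Z}_L^2$ ($x$ eastwards, $y$ northwards), horizontal edge $h(x,y)$ joining $(x,y),(x+1,y)$, vertical edge $u(x,y)$ joining $(x,y),(x,y+1)$, one qubit per edge ($2L^2$ qubits). Plaquette $p(x,y)$ has boundary edges $h(x,y),h(x,y+1),u(x,y),u(x+1,y)$; the star of vertex $(x,y)$ is $h(x,y),h(x-1,y),u(x,y),u(x,y-1)$. Stabilizers $S_p=\prod Z$ over the boundary of $p$, $S_v=\prod X$ over the star of $v$; $\mathcal{S}$ denotes the set of all plaquettes and vertices; $\mathbf{P}_j^{\pm}=\frac12(I\pm S_j)$. Special plaquette $p_*=p(0,0)$, special vertex $v_*=(1,1)$. Correction operators: $C_{p_*}=C_{v_*}=I$; for $p=p(x,0)$ with $x\neq0$, $C_p=X$ on $u(x+1,0)$; for $p=p(x,y)$ with $y\neq0$, $C_p=X$ on $h(x,y+1)$; for $v=(x,1)$ with $x\neq1$, $C_v=Z$ on $h(x-1,1)$; for $v=(x,y)$ with $y\neq1$, $C_v=Z$ on $u(x,y-1)$. For $j\in\mathcal{S}$ define the channel $\mathcal{T}_j(\rho)=\mathbf{P}_j^+\rho\mathbf{P}_j^++C_j\mathbf{P}_j^-\rho\mathbf{P}_j^-C_j^\dagger$, and $\mathcal{L}=\sum_{j\in\mathcal{S}}(\mathcal{T}_j-\mathrm{id})$. Qubit sets: $A_1=h(0,1)$, $A_2=u(1,0)$, $\mathcal{A}=\{A_1,A_2\}$, $\mathcal{B}=\{h(0,y):y\neq1\}$,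 $\mathcal{C}=\{h(x,1):x\neq0\}$, $\mathcal{B}'=\{u(x,0):x\neq1\}$, $\mathcal{C}'=\{u(1,y):y\neq0\}$, $\mathcal{D}$ the remaining $2(L-1)^2$ qubits. Logical operators: $\bar X_1=X_{A_1}\prod_{b\in\mathcal{B}}X_b$, $\bar Z_1=Z_{A_1}\prod_{c\in\mathcal{C}}Z_c$, $\bar X_2=X_{A_2}\prod_{b\in\mathcal{B}'}X_b$, $\bar Z_2=Z_{A_2}\prod_{c\in\mathcal{C}'}Z_c$, $\bar Y_j=i\bar X_j\bar Z_j$, $\bar I=I$; for $P=P_1\otimes P_2$ (first factor on $A_1$, second on $A_2$), $\overline{P}=\bar P_1\bar P_2$. $|+\rangle,|0\rangle$ are the $+1$ eigenstates of $X$, $Z$. *)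

(* Defs.v *)
From HB Require Import structures.
From mathcomp Require Import all_boot all_order all_algebra.
From mathcomp Require Import complex.
From mathcomp Require Import all_classical all_reals all_analysis.
Set Implicit Arguments. Unset Strict Implicit. Unset Printing Implicit Defensive.
Import Order.TTheory GRing.Theory Num.Theory.
Import numFieldNormedType.Exports.
Local Open Scope ring_scope.

(* Single-qubit Pauli letters. Basis convention: false = |0>, true = |1>. *)
Inductive pauli := pI | pX | pY | pZ.

Section Toric.
Variables (R : realType) (L : nat).
Local Notation C := (R[i]).

Definition imag_unit : C := Complex 0 1.

Definition pmat (p : pauli) (a b : bool) : C :=
  match p with
  | pI => if a == b then 1 else 0
  | pX => if a != b then 1 else 0
  | pY => if a == b then 0 else if b then - imag_unit else imag_unit
  | pZ => if a == b then (if a then -1 else 1) else 0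
  end.

(* Lattice Z_L x Z_L (the hypothesis 1 < L is made in the theorem). *)
Definition coord := 'Z_L.
(* inl (x,y) = horizontal edge h(x,y);  inr (x,y) = vertical edge u(x,y). *)
Definition edge := ((coord * coord) + (coord * coord))%type.
Definition hE (x y : coord) : edge := inl (x, y).
Definition uE (x y : coord) : edge := inr (x, y).

(* Computational basis of the 2L^2 qubits, and operators as matrices on it. *)
Definition config := {ffun edge -> bool}.
Definition op := config -> config -> C.

Definition mulo (A B : op) : op := fun a b => \sum_c A a c * B c b.
Definition addo (A B : op) : op := fun a b => A a b + B a b.
Definition scaleo (z : C) (A : op) : op := fun a b => z * A a b.
Definition adjo (A : op) : op := fun a b => conjc (A b a).
Definition tro (A : op) : C := \sum_a A a a.

Definition pstr (f : edge -> pauli) : op :=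
  fun a b => \prod_e pmat (f e) (a e) (b e).
Definition idop : op := pstr (fun _ => pI).

(* Stabilizer sites: inl (x,y) = plaquette p(x,y), inr (x,y) = vertex (x,y). *)
Definition site := ((coord * coord) + (coord * coord))%type.

Definition plaq_bd (x y : coord) : seq edge :=
  [:: hE x y; hE x (y + 1); uE x y; uE (x + 1) y].
Definition star (x y : coord) : seq edge :=
  [:: hE x y; hE (x - 1) y; uE x y; uE x (y - 1)].

Definition stab (j : site) : op :=
  match j with
  | inl (x, y) => pstr (fun e => if e \in plaq_bd x y then pZ else pI)
  | inr (x, y) => pstr (fun e => if e \in star x y then pX else pI)
  end.

Definition projP (j : site) : op := scaleo (1 / 2) (addo idop (stab j)).
Definition projM (j : site) : op := scaleo (1 / 2) (addo idop (scaleo (-1) (stab j))).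

(* The qubit on which the correction C_j acts (None: C_j = I), and its letter. *)
Definition corr_edge (j : site) : option edge :=
  match j with
  | inl (x, y) =>
      if (x == 0) && (y == 0) then None
      else if y == 0 then Some (uE (x + 1) 0) else Some (hE x (y + 1))
  | inr (x, y) =>
      if (x == 1) && (y == 1) then None
      else if y == 1 then Some (hE (x - 1) 1) else Some (uE x (y - 1))
  end.
Definition corr_letter (j : site) : pauli :=
  match j with inl _ => pX | inr _ => pZ end.
Definition corr (j : site) : op :=
  pstr (fun e => if corr_edge j == Some e then corr_letter j else pI).

Definition Tchan (j : site) (rho : op) : op :=
  addo (mulo (mulo (projP j) rho) (projP j))
       (mulo (mulo (mulo (mulo (corr j) (projM j)) rho) (projM j)) (adjo (corr j))).

Definition Lind (rho : op) : op :=
  fun a b => \sum_(j : site) (Tchan j rho a b - rho a b).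

Definition exp_partial (t : R) (n : nat) (rho : op) : op :=
  fun a b => \sum_(k < n) (real_complex R (t ^+ k / (k`!)%:R) * iter k Lind rho a b).

Definition expL (t : R) (rho : op) : op :=
  fun a b => Complex (limn (fun n => complex.Re (exp_partial t n rho a b)))
                     (limn (fun n => complex.Im (exp_partial t n rho a b))).

Definition A1 : edge := hE 0 1.
Definition A2 : edge := uE 1 0.
Definition inA (e : edge) : bool := (e == A1) || (e == A2).
Definition inB (e : edge) : bool :=
  match e with inl (x, y) => (x == 0) && (y != 1) | inr _ => false end.
Definition inC (e : edge) : bool :=
  match e with inl (x, y) => (y == 1) && (x != 0) | inr _ => false end.
Definition inB' (e : edge) : bool :=
  match e with inr (x, y) => (y == 0) && (x != 1) | inl _ => false end.
Definition inC' (e : edge) : bool :=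
  match e with inr (x, y) => (x == 1) && (y != 0) | inl _ => false end.
Definition inD (e : edge) : bool :=
  ~~ [|| inA e, inB e, inB' e, inC e | inC' e].

Definition Xbar1 : op := pstr (fun e => if (e == A1) || inB e then pX else pI).
Definition Zbar1 : op := pstr (fun e => if (e == A1) || inC e then pZ else pI).
Definition Xbar2 : op := pstr (fun e => if (e == A2) || inB' e then pX else pI).
Definition Zbar2 : op := pstr (fun e => if (e == A2) || inC' e then pZ else pI).

Definition logical (Xb Zb : op) (p : pauli) : op :=
  match p with
  | pI => idop
  | pX => Xb
  | pZ => Zb
  | pY => scaleo imag_unit (mulo Xb Zb)
  end.
Definition Pbar (p1 p2 : pauli) : op :=
  mulo (logical Xbar1 Zbar1 p1) (logical Xbar2 Zbar2 p2).

Definition Dedge := {e : edge | inD e}.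
Definition Dconfig := {ffun Dedge -> bool}.
Definition restrD (a : config) : Dconfig := [ffun d : Dedge => a (val d)].

Definition is_stateD (rhoD : Dconfig -> Dconfig -> C) : Prop :=
  (forall v : Dconfig -> C, 0 <= \sum_a \sum_b conjc (v a) * rhoD a b * v b)
  /\ \sum_a rhoD a a = 1.

(* Two-qubit vector |Psi>, amplitude Psi x1 x2 (x1 on A1, x2 on A2). *)
Definition rho0 (Psi : bool -> bool -> C) (rhoD : Dconfig -> Dconfig -> C) : op :=
  fun a b =>
    Psi (a A1) (a A2) * conjc (Psi (b A1) (b A2))
    * (\prod_(e | inB e || inB' e) (1 / 2 : C))
    * (\prod_(e | inC e || inC' e) (if ~~ a e && ~~ b e then 1 else 0))
    * rhoD (restrD a) (restrD b).

Definition expect (Psi : bool -> bool -> C) (p1 p2 : pauli) : C :=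
  \sum_(x1 : bool) \sum_(x2 : bool) \sum_(y1 : bool) \sum_(y2 : bool)
    conjc (Psi x1 x2) * pmat p1 x1 y1 * pmat p2 x2 y2 * Psi y1 y2.

End Toric.

(* Main.v *)
Require Import Defs.
From HB Require Import structures.
From mathcomp Require Import all_boot all_order all_algebra.
From mathcomp Require Import complex.
From mathcomp Require Import all_classical all_reals all_analysis.
Import Order.TTheory GRing.Theory Num.Theory.
Import numFieldNormedType.Exports.
Local Open Scope ring_scope.
From mathcomp Require Import ring.
Set Implicit Arguments. Unset Strict Implicit. Unset Printing Implicit Defensive.
Local Notation mulo := Defs.mulo.
Local Notation addo := Defs.addo.
Local Notation scaleo := Defs.scaleo.

Section Alg.
Variables (R : realType) (L : nat).
Local Notation C := (R[i]).
Local Notation op := (op R L).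
Local Notation config := (config L).
Implicit Types A B D : op.

Lemma mulo_assoc A B D : mulo (mulo A B) D = mulo A (mulo B D).
Proof.
apply: funext => a; apply: funext => b; rewrite /Defs.mulo.
under eq_bigr do rewrite big_distrl /=.
rewrite exchange_big /=; apply: eq_bigr => c _.
rewrite big_distrr /=; apply: eq_bigr => d _; by rewrite mulrA.
Qed.

Lemma mulo_addl A B D : mulo (addo A B) D = addo (mulo A D) (mulo B D).
Proof.
apply: funext => a; apply: funext => b; rewrite /Defs.mulo /Defs.addo -big_split /=.
by apply: eq_bigr => c _; rewrite mulrDl.
Qed.

Lemma mulo_addr A B D : mulo A (addo B D) = addo (mulo A B) (mulo A D).
Proof.
apply: funext => a; apply: funext => b; rewrite /Defs.mulo /Defs.addo -big_split /=.
by apply: eq_bigr => c _; rewrite mulrDr.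
Qed.

Lemma mulo_scalel z A B : mulo (scaleo z A) B = scaleo z (mulo A B).
Proof.
apply: funext => a; apply: funext => b; rewrite /Defs.mulo /Defs.scaleo big_distrr /=.
by apply: eq_bigr => c _; rewrite mulrA.
Qed.

Lemma mulo_scaler z A B : mulo A (scaleo z B) = scaleo z (mulo A B).
Proof.
apply: funext => a; apply: funext => b; rewrite /Defs.mulo /Defs.scaleo big_distrr /=.
by apply: eq_bigr => c _; rewrite mulrCA.
Qed.

Lemma tro_mulC A B : tro (mulo A B) = tro (mulo B A).
Proof.
rewrite /tro /Defs.mulo exchange_big /=; apply: eq_bigr => a _.
by apply: eq_bigr => c _; rewrite mulrC.
Qed.

Lemma tro_add A B : tro (addo A B) = tro A + tro B.
Proof. by rewrite /tro /Defs.addo big_split. Qed.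

Lemma tro_scale z A : tro (scaleo z A) = z * tro A.
Proof. by rewrite /tro /Defs.scaleo big_distrr. Qed.

Lemma idopE (a b : config) : @idop R L a b = if a == b then 1 else 0.
Proof.
rewrite /idop /pstr /=.
case: eqP => [->|/eqP nab].
  by apply: big1 => e _ /=; rewrite eqxx.
have [e he] : exists e, a e != b e.
  apply/existsP; move: nab; apply: contraNT; rewrite negb_exists => /forallP h.
  by apply/eqP/ffunP => e; apply/eqP; move: (h e); rewrite negbK.
by rewrite (bigD1 e) //= (negbTE he) mul0r.
Qed.

Lemma mul1o A : mulo (@idop R L) A = A.
Proof.
apply: funext => a; apply: funext => b; rewrite /Defs.mulo (bigD1 a) //= idopE eqxx mul1r.
by rewrite big1 ?addr0 // => c /negbTE; rewrite idopE eq_sym => ->; rewrite mul0r.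
Qed.

Lemma mulo1 A : mulo A (@idop R L) = A.
Proof.
apply: funext => a; apply: funext => b; rewrite /Defs.mulo (bigD1 b) //= idopE eqxx mulr1.
by rewrite big1 ?addr0 // => c /negbTE; rewrite idopE => ->; rewrite mulr0.
Qed.

End Alg.

Section Pauli.
Variables (R : realType).
Local Notation C := (R[i]).

Definition pm (p q : pauli) (x y : bool) : C := \sum_(c : bool) pmat R p x c * pmat R q c y.
Definition sgn (p q : pauli) : C :=
  match p, q with
  | pX, pY | pX, pZ | pY, pX | pY, pZ | pZ, pX | pZ, pY => -1
  | _, _ => 1 end.

Lemma pm_comm p q x y : pm p q x y = sgn p q * pm q p x y.
Proof.
case: p; case: q; case: x; case: y; rewrite /pm /sgn /pmat !big_bool /=;
  by rewrite !(mul0r, mulr0, mul1r, mulr1, addr0, add0r, mulN1r, mulrN1, opprK, oppr0, mulrN, mulNr).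
Qed.

Lemma pm_sq p x y : pm p p x y = pmat R pI x y.
Proof.
by case: p; case: x; case: y; rewrite /pm /pmat /imag_unit !big_bool /=; simpc.
Qed.

Lemma pmat_herm p x y : conjc (pmat R p y x) = pmat R p x y.
Proof.
case: p; case: x; case: y; rewrite /pmat /imag_unit /= ?conjc0 ?conjc1 ?rmorphN ?conjc1 ?oppr0 //=; try simpc.
all: by apply/eqP; rewrite eq_complex /= ?oppr0 ?opprK ?eqxx.
Qed.
End Pauli.

Section Str.
Variables (R : realType) (L : nat).
Local Notation C := (R[i]).
Local Notation op := (op R L).
Implicit Types A B O : op.
Local Notation Pstr := (@pstr R L).
Local Notation ID := (@idop R L).
Local Notation Stab := (@stab R L).
Local Notation PP := (@projP R L).
Local Notation PM := (@projM R L).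
Local Notation Corr := (@corr R L).

Definition gstr (F : edge L -> bool -> bool -> C) : op :=
  fun a b => \prod_e F e (a e) (b e).

Lemma gstr_mul F G :
  mulo (gstr F) (gstr G) = gstr (fun e x y => \sum_(c : bool) F e x c * G e c y).
Proof.
apply: funext => a; apply: funext => b; rewrite /Defs.mulo /gstr.
rewrite (bigA_distr_bigA (fun e c => F e (a e) c * G e c (b e))) /=.
by apply: eq_bigr => c _; rewrite big_split.
Qed.

Lemma pstr_gstr f : Pstr f = gstr (fun e => pmat R (f e)).
Proof. by []. Qed.

Lemma pstr_mul f g : mulo (Pstr f) (Pstr g) = gstr (fun e => pm R (f e) (g e)).
Proof. by rewrite !pstr_gstr gstr_mul. Qed.

Lemma pstr_comm f g : \prod_e sgn R (f e) (g e) = 1 ->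
  mulo (Pstr f) (Pstr g) = mulo (Pstr g) (Pstr f).
Proof.
move=> h; rewrite !pstr_mul; apply: funext => a; apply: funext => b; rewrite /gstr.
under eq_bigr do rewrite pm_comm.
by rewrite big_split /= h mul1r.
Qed.

Lemma pstr_sq f : mulo (Pstr f) (Pstr f) = ID.
Proof.
rewrite pstr_mul; apply: funext => a; apply: funext => b; rewrite /gstr /idop /pstr.
by apply: eq_bigr => e _; rewrite pm_sq.
Qed.

Lemma pstr_adj f : adjo (Pstr f) = Pstr f.
Proof.
apply: funext => a; apply: funext => b; rewrite /adjo /pstr rmorph_prod.
by apply: eq_bigr => e _; apply: pmat_herm.
Qed.

Definition commo A B := mulo A B = mulo B A.

Lemma commo_mul A B O : commo A O -> commo B O -> commo (mulo A B) O.
Proof.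
rewrite /commo => hA hB; by rewrite mulo_assoc hB -mulo_assoc hA mulo_assoc.
Qed.

Lemma commo_scale z A O : commo A O -> commo (scaleo z A) O.
Proof. by rewrite /commo mulo_scalel mulo_scaler => ->. Qed.

Lemma commo_id O : commo (ID) O.
Proof. by rewrite /commo mul1o mulo1. Qed.

Lemma commo_add A B O : commo A O -> commo B O -> commo (addo A B) O.
Proof. by rewrite /commo mulo_addl mulo_addr => -> ->. Qed.

Lemma commo_sym A B : commo A B -> commo B A.
Proof. by rewrite /commo => ->. Qed.

Lemma two_neq0 : (2%:R : C) != 0.
Proof. by rewrite pnatr_eq0. Qed.

Lemma projP_sq j : mulo (Stab j) (Stab j) = ID ->
  mulo (PP j) (PP j) = PP j.
Proof.
move=> hS; rewrite /projP mulo_scalel mulo_scaler mulo_addl !mulo_addr ?mul1o ?mulo1 hS.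
apply: funext => a; apply: funext => b; rewrite /Defs.scaleo /Defs.addo.
by field.
Qed.

Lemma projM_sq j : mulo (Stab j) (Stab j) = ID ->
  mulo (PM j) (PM j) = PM j.
Proof.
move=> hS; rewrite /projM mulo_scalel mulo_scaler mulo_addl !mulo_addr ?mul1o ?mulo1.
rewrite ?mulo_scalel ?mulo_scaler ?mulo_scalel ?mul1o ?mulo1 hS.
apply: funext => a; apply: funext => b; rewrite /Defs.scaleo /Defs.addo.
by field.
Qed.

Lemma projPM j : addo (PP j) (PM j) = ID.
Proof.
apply: funext => a; apply: funext => b; rewrite /projP /projM /Defs.scaleo /Defs.addo.
by field.
Qed.

Lemma commo_projP j O : commo (Stab j) O -> commo (PP j) O.
Proof. by move=> h; apply: commo_scale; apply: commo_add => //; apply: commo_id. Qed.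

Lemma commo_projM j O : commo (Stab j) O -> commo (PM j) O.
Proof.
move=> h; apply: commo_scale; apply: commo_add; first exact: commo_id.
exact: commo_scale.
Qed.

Lemma tro_sandwich O P rho : mulo P P = P -> commo P O ->
  tro (mulo O (mulo (mulo P rho) P)) = tro (mulo O (mulo P rho)).
Proof.
move=> hP hc.
rewrite tro_mulC mulo_assoc hc tro_mulC mulo_assoc -(mulo_assoc P P) hP.
by [].
Qed.

Lemma key_T j O rho :
  mulo (Stab j) (Stab j) = ID ->
  mulo (adjo (Corr j)) (Corr j) = ID ->
  commo (Stab j) O -> commo (Corr j) O ->
  tro (mulo O (Tchan j rho)) = tro (mulo O rho).
Proof.
move=> hS hC hOS hOC.
rewrite /Tchan mulo_addr tro_add.
rewrite tro_sandwich ?projP_sq //; last exact: commo_projP.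
set M := PM j; set Cc := Corr j.
have -> : tro (mulo O (mulo (mulo (mulo (mulo Cc M) rho) M) (adjo Cc)))
    = tro (mulo O (mulo (mulo M rho) M)).
  rewrite -!mulo_assoc tro_mulC -!mulo_assoc.
  have -> : mulo (mulo (adjo Cc) O) Cc = O by rewrite mulo_assoc -hOC -mulo_assoc hC mul1o.
  by rewrite !mulo_assoc.
rewrite tro_sandwich ?projM_sq //; last exact: commo_projM.
by rewrite -tro_add -mulo_addr -mulo_addl projPM mul1o.
Qed.

End Str.

Section Lat.
Variables (R : realType) (L : nat).
Local Notation C := (R[i]).
Local Notation op := (op R L).
Local Notation crd := (Defs.coord L).
Local Notation Pstr := (@pstr R L).
Local Notation ID := (@idop R L).
Local Notation Stab := (@stab R L).
Local Notation Corr := (@corr R L).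
Local Notation A1 := (Defs.A1 L).
Local Notation A2 := (Defs.A2 L).

Lemma eq_hh (a b c d : crd) : (hE a b == hE c d) = (a == c) && (b == d).
Proof. by []. Qed.
Lemma eq_uu (a b c d : crd) : (uE a b == uE c d) = (a == c) && (b == d).
Proof. by []. Qed.
Lemma eq_hu (a b c d : crd) : (hE a b == uE c d) = false.
Proof. by []. Qed.
Lemma eq_uh (a b c d : crd) : (uE a b == hE c d) = false.
Proof. by []. Qed.

Lemma X1h (a b : crd) : ((hE a b == A1) || inB (hE a b)) = (a == 0).
Proof. by rewrite /Defs.A1 eq_hh /inB /hE /=; case: (a == 0); case: (b == 1). Qed.
Lemma X1u (a b : crd) : ((uE a b == A1) || inB (uE a b)) = false.
Proof. by []. Qed.
Lemma Z1h (a b : crd) : ((hE a b == A1) || inC (hE a b)) = (b == 1).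
Proof. by rewrite /Defs.A1 eq_hh /inC /hE /=; case: (a == 0); case: (b == 1). Qed.
Lemma Z1u (a b : crd) : ((uE a b == A1) || inC (uE a b)) = false.
Proof. by []. Qed.
Lemma X2h (a b : crd) : ((hE a b == A2) || inB' (hE a b)) = false.
Proof. by []. Qed.
Lemma X2u (a b : crd) : ((uE a b == A2) || inB' (uE a b)) = (b == 0).
Proof. by rewrite /Defs.A2 eq_uu /inB' /uE /=; case: (a == 1); case: (b == 0). Qed.
Lemma Z2h (a b : crd) : ((hE a b == A2) || inC' (hE a b)) = false.
Proof. by []. Qed.
Lemma Z2u (a b : crd) : ((uE a b == A2) || inC' (uE a b)) = (a == 1).
Proof. by rewrite /Defs.A2 eq_uu /inC' /uE /=; case: (a == 1); case: (b == 0). Qed.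

Lemma addr1_neq (z : crd) : (z + 1 == z) = false.
Proof.
apply/negbTE/eqP => h; have : z + 1 = z + 0 by rewrite addr0.
by move/addrI/eqP; rewrite oner_eq0.
Qed.
Lemma subr1_neq (z : crd) : (z - 1 == z) = false.
Proof.
apply/negbTE/eqP => h; have : z + (- 1) = z + 0 by rewrite addr0.
by move/addrI/eqP; rewrite oppr_eq0 oner_eq0.
Qed.
Lemma addr1_eq1 (z : crd) : (z + 1 == 1) = (z == 0).
Proof.
apply/eqP/eqP => [h|->]; last by rewrite add0r.
by move: h; rewrite -[X in _ = X]add0r => /addIr.
Qed.
Lemma subr1_eq0 (z : crd) : (z - 1 == 0) = (z == 1).
Proof. by rewrite subr_eq0. Qed.

Lemma uniq_plaq (x y : crd) : uniq (plaq_bd x y).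
Proof.
by rewrite /plaq_bd /= !inE ?eq_hh ?eq_uu ?eq_hu ?eq_uh ?eqxx eq_sym addr1_neq eq_sym addr1_neq.
Qed.
Lemma uniq_star (x y : crd) : uniq (star x y).
Proof.
by rewrite /star /= !inE ?eq_hh ?eq_uu ?eq_hu ?eq_uh ?eqxx eq_sym subr1_neq eq_sym subr1_neq.
Qed.

Lemma sgn_pI_r p : sgn R p pI = 1. Proof. by case: p. Qed.

Lemma sgn_prod_in (f : edge L -> pauli) s l : uniq s ->
  \prod_e sgn R (f e) (if e \in s then l else pI) = \prod_(e <- s) sgn R (f e) l.
Proof.
move=> us; rewrite (big_uniq _ us) [RHS]big_mkcond /=; apply: eq_bigr => e _.
by case: ifP => // _; rewrite sgn_pI_r.
Qed.

Lemma sgn_prod_opt (f : edge L -> pauli) (o : option (edge L)) l :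
  \prod_e sgn R (f e) (if o == Some e then l else pI) =
  (if o is Some e0 then sgn R (f e0) l else 1).
Proof.
case: o => [e0|]; last by apply: big1 => e _; rewrite sgn_pI_r.
rewrite (bigD1 e0) //= eqxx big1 ?mulr1 // => e ne.
have -> : (Some e0 == Some e) = false by apply/negbTE; rewrite eq_sym.
by rewrite sgn_pI_r.
Qed.

Lemma sgn_same (c d : edge L -> bool) l :
  \prod_e sgn R (if c e then l else pI) (if d e then l else pI) = 1.
Proof. by apply: big1 => e _; case: (c e); case: (d e); case: l. Qed.

Definition good (O : op) := forall j, commo O (Stab j) /\ commo O (Corr j).

Lemma good_mul A B : good A -> good B -> good (mulo A B).
Proof.
move=> hA hB j; case: (hA j) => hA1 hA2; case: (hB j) => hB1 hB2.
by split; apply: commo_mul.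
Qed.
Lemma good_scale z A : good A -> good (scaleo z A).
Proof. by move=> hA j; case: (hA j) => h1 h2; split; apply: commo_scale. Qed.
Lemma good_id : good ID.
Proof. by move=> j; split; apply: commo_id. Qed.

Ltac lat4 := rewrite sgn_prod_in ?uniq_plaq ?uniq_star // /plaq_bd /star !big_cons big_nil
  ?X1h ?X1u ?Z1h ?Z1u ?X2h ?X2u ?Z2h ?Z2u;
  repeat (case: ifP => _); by rewrite /= ?(mulr1, mul1r, mulN1r, opprK).

Lemma good_X1 : good (@Xbar1 R L).
Proof.
case=> [[x y]|[x y]]; split; rewrite /commo /Xbar1 /stab /corr; apply: pstr_comm.
- lat4.
- by rewrite /= sgn_same.
- by rewrite sgn_same.
- rewrite sgn_prod_opt /corr_edge.
  case: ifP => h1 //; case: ifP => h2; last by rewrite X1u.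
  rewrite X1h subr1_eq0; move/eqP: h2 => h2; rewrite h2 eqxx andbT in h1; by rewrite h1.
Qed.

Lemma good_Z1 : good (@Zbar1 R L).
Proof.
case=> [[x y]|[x y]]; split; rewrite /commo /Zbar1 /stab /corr; apply: pstr_comm.
- by rewrite sgn_same.
- rewrite sgn_prod_opt /corr_edge.
  case: ifP => h1 //; case: ifP => h2; first by rewrite Z1u.
  by rewrite Z1h addr1_eq1 h2.
- lat4.
- by rewrite sgn_same.
Qed.

Lemma good_X2 : good (@Xbar2 R L).
Proof.
case=> [[x y]|[x y]]; split; rewrite /commo /Xbar2 /stab /corr; apply: pstr_comm.
- lat4.
- by rewrite /= sgn_same.
- by rewrite sgn_same.
- rewrite sgn_prod_opt /corr_edge.
  case: ifP => h1 //; case: ifP => h2; first by rewrite X2h.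
  by rewrite X2u subr1_eq0 h2.
Qed.

Lemma good_Z2 : good (@Zbar2 R L).
Proof.
case=> [[x y]|[x y]]; split; rewrite /commo /Zbar2 /stab /corr; apply: pstr_comm.
- by rewrite sgn_same.
- rewrite sgn_prod_opt /corr_edge.
  case: ifP => h1 //; case: ifP => h2; last by rewrite Z2h.
  rewrite Z2u addr1_eq1; move/eqP: h2 => h2; rewrite h2 eqxx andbT in h1; by rewrite h1.
- lat4.
- by rewrite sgn_same.
Qed.

Lemma good_logical Xb Zb p : good Xb -> good Zb -> good (logical Xb Zb p).
Proof.
move=> hX hZ; case: p => //=; first exact: good_id.
by apply: good_scale; apply: good_mul.
Qed.

Lemma good_Pbar p1 p2 : good (@Pbar R L p1 p2).
Proof.
apply: good_mul; apply: good_logical.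
- exact: good_X1. - exact: good_Z1. - exact: good_X2. - exact: good_Z2.
Qed.

End Lat.

Section Tr.
Variables (R : realType) (L : nat).
Local Notation C := (R[i]).
Local Notation op := (op R L).
Local Notation ID := (@idop R L).
Local Notation Stab := (@stab R L).
Local Notation Corr := (@corr R L).

Lemma stab_sq j : mulo (Stab j) (Stab j) = ID.
Proof. by case: j => [[x y]|[x y]]; rewrite /stab; apply: pstr_sq. Qed.

Lemma corr_unit j : mulo (adjo (Corr j)) (Corr j) = ID.
Proof. by rewrite /corr pstr_adj pstr_sq. Qed.

Lemma tro_Lind (O X : op) : good O -> tro (mulo O (Lind X)) = 0.
Proof.
move=> hO.
have key j : tro (mulo O (Tchan j X)) = tro (mulo O X).
  case: (hO j) => h1 h2.
  by apply: key_T; [exact: stab_sq | exact: corr_unit | exact: commo_sym | exact: commo_sym].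
transitivity (\sum_j (tro (mulo O (Tchan j X)) - tro (mulo O X))); last first.
  by rewrite big1 // => j _; rewrite key subrr.
rewrite /tro /Defs.mulo /Lind.
transitivity (\sum_j \sum_(a : config L) \sum_(c : config L) (O a c * Tchan j X c a - O a c * X c a)); last first.
  by apply: eq_bigr => j _; rewrite -sumrB; apply: eq_bigr => a _; rewrite sumrB.
rewrite [RHS]exchange_big /=; apply: eq_bigr => a _; rewrite [RHS]exchange_big /=; apply: eq_bigr => c _.
rewrite big_distrr /=; apply: eq_bigr => j _; by rewrite mulrBr.
Qed.

Lemma tro_exp_partial (O : op) t n (rho : op) : good O -> (0 < n)%N ->
  tro (mulo O (exp_partial t n rho)) = tro (mulo O rho).
Proof.
move=> hO hn.
have -> : tro (mulo O (exp_partial t n rho)) =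
    \sum_(k < n) (real_complex R (t ^+ k / (k`!)%:R)) * tro (mulo O (iter k (@Lind R L) rho)).
  rewrite /tro /Defs.mulo /exp_partial.
  under [RHS]eq_bigr do rewrite big_distrr /=.
  rewrite [RHS]exchange_big; apply: eq_bigr => a _ /=.
  under [RHS]eq_bigr do rewrite big_distrr /=.
  rewrite [RHS]exchange_big; apply: eq_bigr => c _ /=.
  rewrite big_distrr; apply: eq_bigr => k _ /=; by rewrite mulrCA.
case: n hn => // n _; rewrite big_ord_recl /= big1 ?addr0.
  by rewrite expr0 fact0 divr1 rmorph1 mul1r.
by move=> k _; rewrite tro_Lind // mulr0.
Qed.

End Tr.

Section Reg.
Variables (R : realType) (L : nat).
Local Notation C := (R[i]).
Local Notation crd := (Defs.coord L).
Local Notation A1 := (Defs.A1 L).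
Local Notation A2 := (Defs.A2 L).

Lemma eq_ll (a b c d : crd) : (inl (a, b) == inl (c, d) :> edge L) = (a == c) && (b == d).
Proof. by []. Qed.
Lemma eq_rr (a b c d : crd) : (inr (a, b) == inr (c, d) :> edge L) = (a == c) && (b == d).
Proof. by []. Qed.
Lemma eq_lr (a b c d : crd) : (inl (a, b) == inr (c, d) :> edge L) = false.
Proof. by []. Qed.
Lemma eq_rl (a b c d : crd) : (inr (a, b) == inl (c, d) :> edge L) = false.
Proof. by []. Qed.

Lemma prod_regions (G1 G2 GB GC GD : edge L -> C) :
  \prod_e (if e == A1 then G1 e else if e == A2 then G2 e
           else if inB e || inB' e then GB e else if inC e || inC' e then GC e
           else if inD e then GD e else 1)
  = G1 A1 * G2 A2 * \prod_(e | inB e || inB' e) GB e *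
    \prod_(e | inC e || inC' e) GC e * \prod_(e | inD e) GD e.
Proof.
transitivity (\prod_e ((if e == A1 then G1 e else 1) * (if e == A2 then G2 e else 1) *
  (if inB e || inB' e then GB e else 1) * (if inC e || inC' e then GC e else 1) *
  (if inD e then GD e else 1))).
  apply: eq_bigr => e _; case: e => [[a b]|[a b]];
    rewrite /inD /inA /Defs.A1 /Defs.A2 /hE /uE ?eq_ll ?eq_rr ?eq_lr ?eq_rl /=;
    [case: (a == 0); case: (b == 1) | case: (a == 1); case: (b == 0)];
    by rewrite /= ?(mulr1, mul1r).
by rewrite !big_split /= -!big_mkcond !big_pred1_eq.
Qed.


Definition ind (b : bool) : C := if b then 1 else 0.

Lemma prod_ind (Q P : pred (edge L)) :
  \prod_(e | Q e) ind (P e) = ind [forall e, Q e ==> P e].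
Proof.
case: (boolP [forall e, Q e ==> P e]) => [/forallP h|].
  by apply: big1 => e he; move: (h e); rewrite he /= => ->.
rewrite negb_forall => /existsP [e]; rewrite negb_imply => /andP [hq hp].
by rewrite (bigD1 e) //= /ind (negbTE hp) mul0r.
Qed.

Definition ext (d : Dconfig L) (e : edge L) : bool :=
  if insub e : option (Dedge L) is Some e' then d e' else false.

Lemma ext_val d (e' : Dedge L) : ext d (val e') = d e'.
Proof. by rewrite /ext valK. Qed.

Lemma forall_restrD (c : config L) d :
  [forall e, inD e ==> (c e == ext d e)] = (restrD c == d).
Proof.
apply/forallP/eqP => [h|<-].
  apply/ffunP => e'; rewrite ffunE; move: (h (val e')); rewrite (valP e') /=.
  by rewrite ext_val => /eqP.
move=> e; apply/implyP => he; rewrite /ext.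
case: insubP => [e' _ He|]; last by rewrite he.
by rewrite /restrD ffunE He.
Qed.

Lemma forall_ext d d' :
  [forall e, inD e ==> (ext d e == ext d' e)] = (d == d').
Proof.
apply/forallP/eqP => [h|<-]; last by move=> e; rewrite eqxx implybT.
apply/ffunP => e'; move: (h (val e')); rewrite (valP e') /=.
by rewrite !ext_val => /eqP.
Qed.

End Reg.

Section Rho.
Variables (R : realType) (L : nat) (Psi : bool -> bool -> R[i]) (rhoD : Dconfig L -> Dconfig L -> R[i]).
Local Notation C := (R[i]).
Local Notation A1 := (Defs.A1 L).
Local Notation A2 := (Defs.A2 L).
Local Notation T := (((bool * bool) * (bool * bool)) * (Dconfig L * Dconfig L))%type.
Local Notation ind := (ind R).

Definition coef (p : T) : C := Psi p.1.2.1 p.1.2.2 * conjc (Psi p.1.1.1 p.1.1.2) * rhoD p.2.1 p.2.2.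

Definition Hm (p : T) (e : edge L) (v u : bool) : C :=
  if e == A1 then ind (v == p.1.2.1) * ind (u == p.1.1.1)
  else if e == A2 then ind (v == p.1.2.2) * ind (u == p.1.1.2)
  else if inB e || inB' e then 1 / 2
  else if inC e || inC' e then ind (~~ v && ~~ u)
  else if inD e then ind (v == ext p.2.1 e) * ind (u == ext p.2.2 e)
  else 1.

Lemma Hprod p (c a : config L) : \prod_e Hm p e (c e) (a e) =
  ind (c A1 == p.1.2.1) * ind (a A1 == p.1.1.1) * (ind (c A2 == p.1.2.2) * ind (a A2 == p.1.1.2))
  * \prod_(e : edge L | inB e || inB' e) (1 / 2 : C)
  * \prod_(e : edge L | inC e || inC' e) ind (~~ c e && ~~ a e)
  * (ind (restrD c == p.2.1) * ind (restrD a == p.2.2)).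
Proof.
rewrite /Hm prod_regions; congr (_ * _).
rewrite [\prod_(e | inD e) _]big_split /=.
by rewrite [\prod_(e | inD e) ind (c e == _)]prod_ind [\prod_(e | inD e) ind (a e == _)]prod_ind !forall_restrD.
Qed.


Lemma rho0_rep (c a : config L) : rho0 Psi rhoD c a = \sum_(p : T) coef p * \prod_e Hm p e (c e) (a e).
Proof.
pose w : T := (((a A1, a A2), (c A1, c A2)), (restrD c, restrD a)).
rewrite (bigD1 w) // [\sum_(i | _) _]big1 ?addr0.
  rewrite Hprod /w /coef /= !eqxx /ind /rho0 /=.
  ring.
move=> [[[x1 x2] [y1 y2]] [d d']] hp; rewrite Hprod /=.
case: (eqVneq (c A1) y1) => [e1|n1]; last by rewrite /ind /= !(mul0r, mulr0).
case: (eqVneq (a A1) x1) => [e2|n2]; last by rewrite /ind /= !(mul0r, mulr0).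
case: (eqVneq (c A2) y2) => [e3|n3]; last by rewrite /ind /= !(mul0r, mulr0).
case: (eqVneq (a A2) x2) => [e4|n4]; last by rewrite /ind /= !(mul0r, mulr0).
case: (eqVneq (restrD c) d) => [e5|n5]; last by rewrite /ind /= !(mul0r, mulr0).
case: (eqVneq (restrD a) d') => [e6|n6]; last by rewrite /ind /= !(mul0r, mulr0).
by move: hp; rewrite /w -e1 -e2 -e3 -e4 -e5 -e6 eqxx.
Qed.

Lemma tro_gstr (G : edge L -> bool -> bool -> C) :
  tro (gstr G) = \prod_e \sum_(u : bool) G e u u.
Proof. by rewrite /tro /gstr bigA_distr_bigA. Qed.

Lemma tro_mulo_sum (A : Defs.op R L) (k : T -> C) (B : T -> Defs.op R L) :
  tro (mulo A (fun c a => \sum_p k p * B p c a)) = \sum_p k p * tro (mulo A (B p)).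
Proof.
rewrite /tro /Defs.mulo.
under [RHS]eq_bigr do rewrite big_distrr /=.
rewrite [RHS]exchange_big; apply: eq_bigr => a _ /=.
under [RHS]eq_bigr do rewrite big_distrr /=.
rewrite [RHS]exchange_big; apply: eq_bigr => c _ /=.
rewrite big_distrr; apply: eq_bigr => p _ /=; by rewrite mulrCA.
Qed.

Lemma sum_pair (I J : finType) (G : I * J -> C) : \sum_p G p = \sum_i \sum_j G (i, j).
Proof. by rewrite pair_bigA; apply: eq_bigr => [[i j]]. Qed.

Lemma tro_F_rho0 (F : edge L -> bool -> bool -> C) p1 p2
  (hA1 : F A1 = pmat R p1) (hA2 : F A2 = pmat R p2)
  (hB : forall e, inB e || inB' e -> 1 / 2 * (\sum_u \sum_v F e u v) = 1)
  (hC : forall e, inC e || inC' e -> F e false false = 1)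
  (hD : forall e, inD e -> F e = pmat R pI)
  (htr : \sum_d rhoD d d = 1) :
  tro (mulo (gstr F) (rho0 Psi rhoD)) = expect Psi p1 p2.
Proof.
have -> : rho0 Psi rhoD = (fun c a => \sum_p coef p * gstr (Hm p) c a).
  by apply: funext => c; apply: funext => a; rewrite rho0_rep.
rewrite tro_mulo_sum.
have step p : tro (mulo (gstr F) (gstr (Hm p))) =
    pmat R p1 p.1.1.1 p.1.2.1 * pmat R p2 p.1.1.2 p.1.2.2 * ind (p.2.1 == p.2.2).
  case: p => [[[x1 x2] [y1 y2]] [d d']] /=.
  rewrite gstr_mul tro_gstr.
  transitivity (\prod_e (if e == A1 then F e x1 y1 else if e == A2 then F e x2 y2
     else if inB e || inB' e then 1 / 2 * \sum_u \sum_v F e u v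
     else if inC e || inC' e then F e false false
     else if inD e then ind (ext d e == ext d' e) else 1)).
    apply: eq_bigr => e _; rewrite /Hm /=.
    case: ifP => h1.
      by rewrite !big_bool /ind; case: x1; case: y1; rewrite /= ?(mulr0, mulr1, addr0, add0r).
    case: ifP => h2.
      by rewrite !big_bool /ind; case: x2; case: y2; rewrite /= ?(mulr0, mulr1, addr0, add0r).
    case: ifP => hb.
      rewrite big_distrr; apply: eq_bigr => u _; rewrite big_distrr; apply: eq_bigr => v _.
      by rewrite mulrC.
    case: ifP => hc.
      by rewrite !big_bool /ind /= ?(mulr0, mulr1, addr0, add0r).
    case: ifP => hd.
      rewrite (hD e hd) !big_bool /ind /pmat.
      by case: (ext d e); case: (ext d' e); rewrite /= ?(mulr0, mulr1, addr0, add0r).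
    by move: hd hb hc; rewrite /inD /inA h1 h2 /=; case: (inB e); case: (inB' e); case: (inC e); case: (inC' e).
  rewrite prod_regions hA1 hA2.
  have -> : \prod_(e | inB e || inB' e) (1 / 2 * (\sum_u \sum_v F e u v)) = 1 by apply: big1.
  have -> : \prod_(e | inC e || inC' e) F e false false = 1 by apply: big1.
  by rewrite prod_ind forall_ext !mulr1.
under eq_bigr do rewrite step.
rewrite sum_pair.
have hin q : \sum_(r : Dconfig L * Dconfig L) coef (q, r) *
     (pmat R p1 (q, r).1.1.1 (q, r).1.2.1 * pmat R p2 (q, r).1.1.2 (q, r).1.2.2 * ind ((q, r).2.1 == (q, r).2.2))
   = Psi q.2.1 q.2.2 * conjc (Psi q.1.1 q.1.2) * (pmat R p1 q.1.1 q.2.1 * pmat R p2 q.1.2 q.2.2).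
  rewrite sum_pair /coef /=.
  transitivity (\sum_(d : Dconfig L) Psi q.2.1 q.2.2 * conjc (Psi q.1.1 q.1.2) *
      (pmat R p1 q.1.1 q.2.1 * pmat R p2 q.1.2 q.2.2) * rhoD d d).
    apply: eq_bigr => d _; rewrite (bigD1 d) //= big1 ?addr0.
      by rewrite /ind eqxx; ring.
    by move=> d' /negbTE; rewrite eq_sym /ind => ->; rewrite !mulr0.
  by rewrite -big_distrr /= htr mulr1.
under eq_bigr do rewrite hin.
rewrite sum_pair /expect.
under eq_bigr do rewrite sum_pair.
rewrite [LHS]sum_pair.
rewrite /= !big_bool /=.
ring.
Qed.

End Rho.

Section PbarG.
Variables (R : realType) (L : nat).
Local Notation C := (R[i]).
Local Notation A1 := (Defs.A1 L).
Local Notation A2 := (Defs.A2 L).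
Local Notation Pstr := (@pstr R L).

Definition xl p := match p with pX | pY => pX | _ => pI end.
Definition zl p := match p with pZ | pY => pZ | _ => pI end.

Definition g1 p (e : edge L) := if e == A1 then p else if inB e then xl p else if inC e then zl p else pI.
Definition g2 p (e : edge L) := if e == A2 then p else if inB' e then xl p else if inC' e then zl p else pI.

Lemma BC_disj (e : edge L) : inB e -> inC e = false.
Proof. by case: e => [[a b]|[a b]] //= /andP [/eqP -> _]; rewrite eqxx andbF. Qed.
Lemma BC'_disj (e : edge L) : inB' e -> inC' e = false.
Proof. by case: e => [[a b]|[a b]] //= /andP [/eqP -> _]; rewrite eqxx andbF. Qed.

Lemma pm_Ir p x y : pm R p pI x y = pmat R p x y.
Proof.
by case: p; case: x; case: y; rewrite /pm /pmat !big_bool /= ?(mulr0, mulr1, addr0, add0r).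
Qed.
Lemma pm_Il p x y : pm R pI p x y = pmat R p x y.
Proof.
by case: p; case: x; case: y; rewrite /pm /pmat !big_bool /= ?(mul0r, mul1r, addr0, add0r).
Qed.
Lemma pm_XZ x y : imag_unit R * pm R pX pZ x y = pmat R pY x y.
Proof.
case: x; case: y; rewrite /pm /pmat /imag_unit !big_bool /= ?(mul0r, mul1r, mulr0, mulr1, addr0, add0r) //; by simpc.
Qed.

Lemma logical1 p : logical (@Xbar1 R L) (@Zbar1 R L) p = Pstr (g1 p).
Proof.
case: p => /=.
- apply: funext => a; apply: funext => b; rewrite /idop /pstr; apply: eq_bigr => e _.
  by rewrite /g1; case: (e == A1); case: (inB e); case: (inC e).
- rewrite /Xbar1; congr pstr; apply: funext => e; rewrite /g1.
  by case: (e == A1); case: (inB e); case: (inC e).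
- rewrite pstr_mul; apply: funext => a; apply: funext => b; rewrite /Defs.scaleo /gstr /pstr.
  rewrite (bigD1 A1) // [in RHS](bigD1 A1) // /g1 !eqxx /= mulrA pm_XZ; congr (_ * _).
  apply: eq_bigr => e /negbTE ->; rewrite /=.
  case hb: (inB e); first by rewrite (BC_disj hb) pm_Ir.
  by case: (inC e); rewrite pm_Il.
- rewrite /Zbar1; congr pstr; apply: funext => e; rewrite /g1.
  case: (e == A1) => //=; case hb: (inB e) => //; by rewrite (BC_disj hb).
Qed.

Lemma logical2 p : logical (@Xbar2 R L) (@Zbar2 R L) p = Pstr (g2 p).
Proof.
case: p => /=.
- apply: funext => a; apply: funext => b; rewrite /idop /pstr; apply: eq_bigr => e _.
  by rewrite /g2; case: (e == A2); case: (inB' e); case: (inC' e).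
- rewrite /Xbar2; congr pstr; apply: funext => e; rewrite /g2.
  by case: (e == A2); case: (inB' e); case: (inC' e).
- rewrite pstr_mul; apply: funext => a; apply: funext => b; rewrite /Defs.scaleo /gstr /pstr.
  rewrite (bigD1 A2) // [in RHS](bigD1 A2) // /g2 !eqxx /= mulrA pm_XZ; congr (_ * _).
  apply: eq_bigr => e /negbTE ->; rewrite /=.
  case hb: (inB' e); first by rewrite (BC'_disj hb) pm_Ir.
  by case: (inC' e); rewrite pm_Il.
- rewrite /Zbar2; congr pstr; apply: funext => e; rewrite /g2.
  case: (e == A2) => //=; case hb: (inB' e) => //; by rewrite (BC'_disj hb).
Qed.

Definition gg p1 p2 (e : edge L) := match e with inl _ => g1 p1 e | inr _ => g2 p2 e end.

Lemma Pbar_gg p1 p2 : @Pbar R L p1 p2 = Pstr (gg p1 p2).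
Proof.
rewrite /Pbar logical1 logical2 pstr_mul.
apply: funext => a; apply: funext => b; rewrite /gstr /pstr; apply: eq_bigr => e _.
case: e => [[x y]|[x y]] /=.
  by rewrite /g2 /Defs.A2 /uE eq_lr /= pm_Ir.
by rewrite /g1 /Defs.A1 /hE eq_rl /= pm_Il.
Qed.

Lemma half_sum_xl p : 1 / 2 * (\sum_u \sum_v pmat R (xl p) u v) = 1.
Proof.
case: p; rewrite /= !big_bool /pmat /= ?(addr0, add0r);
  by rewrite -[1 + 1]/(2%:R) mul1r mulVf // pnatr_eq0.
Qed.

Lemma zl_ff p : pmat R (zl p) false false = 1.
Proof. by case: p. Qed.

Lemma tro_Pbar_rho0 p1 p2 Psi rhoD : is_stateD rhoD ->
  tro (mulo (@Pbar R L p1 p2) (rho0 Psi rhoD)) = expect Psi p1 p2.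
Proof.
move=> [_ htr]; rewrite Pbar_gg pstr_gstr; apply: tro_F_rho0 => //.
- move=> e; case: e => [[a b]|[a b]];
    rewrite /gg /g1 /g2 /inD /inA /Defs.A1 /Defs.A2 /hE /uE ?eq_ll ?eq_rr ?eq_lr ?eq_rl /=;
    [case: (a == 0); case: (b == 1) | case: (a == 1); case: (b == 0)] => //= _;
    exact: half_sum_xl.
- move=> e; case: e => [[a b]|[a b]];
    rewrite /gg /g1 /g2 /inD /inA /Defs.A1 /Defs.A2 /hE /uE ?eq_ll ?eq_rr ?eq_lr ?eq_rl /=;
    [case: (a == 0); case: (b == 1) | case: (a == 1); case: (b == 0)] => //= _;
    exact: zl_ff.
- move=> e; case: e => [[a b]|[a b]];
    rewrite /gg /g1 /g2 /inD /inA /Defs.A1 /Defs.A2 /hE /uE ?eq_ll ?eq_rr ?eq_lr ?eq_rl /=;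
    by [case: (a == 0); case: (b == 1) | case: (a == 1); case: (b == 0)].
Qed.

End PbarG.

Section Bound.
Variables (R : realType) (L : nat).
Local Notation C := (R[i]).
Local Notation op := (op R L).

Definition n1 (z : C) : R := `|complex.Re z| + `|complex.Im z|.

Lemma n1_ge0 z : 0 <= n1 z.
Proof. by rewrite /n1 addr_ge0. Qed.

Lemma n1D x y : n1 (x + y) <= n1 x + n1 y.
Proof.
case: x => a b; case: y => c d; rewrite /n1 /=.
rewrite [X in _ <= X](_ : _ = (`|a| + `|c|) + (`|b| + `|d|)); last by ring.
by apply: lerD; apply: ler_normD.
Qed.

Lemma n1N x : n1 (- x) = n1 x.
Proof. by case: x => a b; rewrite /n1 /= !normrN. Qed.

Lemma n1B x y : n1 (x - y) <= n1 x + n1 y.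
Proof. by rewrite -(n1N y); apply: n1D. Qed.

Lemma n1M x y : n1 (x * y) <= n1 x * n1 y.
Proof.
case: x => a b; case: y => c d; rewrite /n1 /=.
rewrite [X in _ <= X](_ : _ = (`|a| * `|c| + `|b| * `|d|) + (`|a| * `|d| + `|b| * `|c|)); last by ring.
apply: lerD.
  by apply: le_trans (ler_normB _ _) _; rewrite !normrM.
by apply: le_trans (ler_normD _ _) _; rewrite !normrM.
Qed.

Lemma n1_sum (I : Type) (r : seq I) (P : pred I) (F : I -> C) :
  n1 (\sum_(i <- r | P i) F i) <= \sum_(i <- r | P i) n1 (F i).
Proof.
apply: (big_ind2 (fun x y => n1 x <= y)).
- by rewrite /n1 /= normr0 addr0.
- by move=> x1 x2 y1 y2 h1 h2; apply: le_trans (n1D _ _) (lerD h1 h2).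
- by [].
Qed.

Lemma Re_le_n1 z : `|complex.Re z| <= n1 z.
Proof. by rewrite /n1 lerDl. Qed.
Lemma Im_le_n1 z : `|complex.Im z| <= n1 z.
Proof. by rewrite /n1 lerDr. Qed.

Definition Nrm (A : op) : R := \sum_a \sum_b n1 (A a b).

Lemma Nrm_ge0 A : 0 <= Nrm A.
Proof. by apply: sumr_ge0 => a _; apply: sumr_ge0 => b _; apply: n1_ge0. Qed.

Lemma sum_term_le (I : finType) (F : I -> R) i : (forall j, 0 <= F j) -> F i <= \sum_j F j.
Proof. by move=> h; rewrite (bigD1 i) //= lerDl sumr_ge0. Qed.

Lemma entry_le A a b : n1 (A a b) <= Nrm A.
Proof.
apply: le_trans (sum_term_le a _) => [|j]; last by apply: sumr_ge0 => ? _; apply: n1_ge0.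
by apply: sum_term_le => j; apply: n1_ge0.
Qed.

Lemma Nrm_add A B : Nrm (addo A B) <= Nrm A + Nrm B.
Proof.
rewrite /Nrm -big_split /=; apply: ler_sum => a _; rewrite -big_split /=.
by apply: ler_sum => b _; apply: n1D.
Qed.

Lemma Nrm_mul A B : Nrm (mulo A B) <= Nrm A * Nrm B.
Proof.
apply: (@le_trans _ _ (\sum_a \sum_c n1 (A a c) * \sum_b n1 (B c b))).
  rewrite /Nrm /Defs.mulo; apply: ler_sum => a _.
  under [X in _ <= X]eq_bigr do rewrite big_distrr /=.
  rewrite [X in _ <= X]exchange_big /=; apply: ler_sum => b _.
  by apply: le_trans (n1_sum _ _ _) _; apply: ler_sum => c _; apply: n1M.
rewrite /Nrm big_distrl /=; apply: ler_sum => a _; rewrite big_distrl /=.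
apply: ler_sum => c _; apply: ler_wpM2l; first exact: n1_ge0.
by rewrite [X in _ <= X](bigD1 c) //= lerDl; apply: sumr_ge0 => ? _; apply: sumr_ge0 => ? _; exact: n1_ge0.
Qed.

Lemma Nrm_mul_le A B x : Nrm A <= x -> Nrm (mulo A B) <= x * Nrm B.
Proof.
move=> h; apply: le_trans (Nrm_mul _ _) _; apply: ler_wpM2r => //; exact: Nrm_ge0.
Qed.

Definition KT (j : site L) : R :=
  Nrm (projP R j) * Nrm (projP R j) +
  Nrm (corr R j) * Nrm (projM R j) * Nrm (projM R j) * Nrm (adjo (corr R j)).

Lemma Nrm_T j A : Nrm (Tchan j A) <= KT j * Nrm A.
Proof.
have h1 : Nrm (mulo (mulo (projP R j) A) (projP R j)) <=
   Nrm (projP R j) * Nrm A * Nrm (projP R j).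
  by do 2 apply: Nrm_mul_le; apply: le_refl.
have h2 : Nrm (mulo (mulo (mulo (mulo (corr R j) (projM R j)) A) (projM R j)) (adjo (corr R j))) <=
   Nrm (corr R j) * Nrm (projM R j) * Nrm A * Nrm (projM R j) * Nrm (adjo (corr R j)).
  by do 4 apply: Nrm_mul_le; apply: le_refl.
apply: le_trans (Nrm_add _ _) _; apply: le_trans (lerD h1 h2) _.
by rewrite /KT le_eqVlt; apply/orP; left; apply/eqP; ring.
Qed.

Definition KL : R := \sum_j (KT j + 1).

Lemma KT_ge0 j : 0 <= KT j.
Proof. by rewrite /KT addr_ge0 // ?mulr_ge0 // Nrm_ge0. Qed.

Lemma KL_ge0 : 0 <= KL.
Proof. by apply: sumr_ge0 => j _; rewrite addr_ge0 // KT_ge0. Qed.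

Lemma Nrm_Lind A : Nrm (Lind A) <= KL * Nrm A.
Proof.
apply: (@le_trans _ _ (\sum_j (Nrm (Tchan j A) + Nrm A))).
  rewrite /Nrm /Lind.
  apply: (@le_trans _ _ (\sum_a \sum_b \sum_j (n1 (Tchan j A a b) + n1 (A a b)))).
    apply: ler_sum => a _; apply: ler_sum => b _.
    apply: le_trans (n1_sum _ _ _) _; apply: ler_sum => j _; exact: n1B.
  rewrite le_eqVlt; apply/orP; left; apply/eqP.
  rewrite exchange_big /=; under eq_bigr do rewrite exchange_big /=.
  rewrite exchange_big /=; apply: eq_bigr => j _; rewrite -big_split /=.
  by rewrite exchange_big /=; apply: eq_bigr => a _; rewrite big_split.
rewrite /KL big_distrl /=; apply: ler_sum => j _.
by rewrite mulrDl mul1r lerD2r Nrm_T.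
Qed.

Lemma Nrm_iter k A : Nrm (iter k (@Lind R L) A) <= KL ^+ k * Nrm A.
Proof.
elim: k => [|k IH]; first by rewrite expr0 mul1r.
rewrite iterS exprS -mulrA; apply: le_trans (Nrm_Lind _) _.
by apply: ler_wpM2l => //; exact: KL_ge0.
Qed.

End Bound.

Section Conv.
Variables (R : realType) (L : nat).
Local Notation C := (R[i]).
Local Notation op := (op R L).

Lemma ReD (x y : C) : complex.Re (x + y) = complex.Re x + complex.Re y.
Proof. by case: x; case: y. Qed.
Lemma ImD (x y : C) : complex.Im (x + y) = complex.Im x + complex.Im y.
Proof. by case: x; case: y. Qed.

Lemma Re_sum (I : Type) (r : seq I) (P : pred I) (F : I -> C) :
  complex.Re (\sum_(i <- r | P i) F i) = \sum_(i <- r | P i) complex.Re (F i).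
Proof. by apply: (big_morph _ ReD). Qed.
Lemma Im_sum (I : Type) (r : seq I) (P : pred I) (F : I -> C) :
  complex.Im (\sum_(i <- r | P i) F i) = \sum_(i <- r | P i) complex.Im (F i).
Proof. by apply: (big_morph _ ImD). Qed.

Lemma ReM (x y : C) : complex.Re (x * y) = complex.Re x * complex.Re y - complex.Im x * complex.Im y.
Proof. by case: x; case: y. Qed.
Lemma ImM (x y : C) : complex.Im (x * y) = complex.Re x * complex.Im y + complex.Im x * complex.Re y.
Proof. by case: x => a b; case: y => c d /=; ring. Qed.

Lemma Re_rM (r : R) (z : C) : complex.Re (real_complex R r * z) = r * complex.Re z.
Proof. by case: z => a b /=; rewrite mul0r subr0. Qed.
Lemma Im_rM (r : R) (z : C) : complex.Im (real_complex R r * z) = r * complex.Im z.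
Proof. by case: z => a b /=; rewrite mul0r addr0. Qed.

Lemma series_bound_cvg (t : R) (ht : 0 <= t) (w : nat -> R) (M : R) :
  (forall k, `|w k| <= KL R L ^+ k * M) -> 0 <= M ->
  cvgn (series (fun k => t ^+ k / (k`!)%:R * w k)).
Proof.
move=> hw hM; apply: normed_cvg.
have hf k : 0 <= t ^+ k / (k`!)%:R by rewrite divr_ge0 // exprn_ge0.
apply: (@series_le_cvg _ _ (fun k => M * exp_coeff (t * KL R L) k)).
- by move=> k /=; apply: normr_ge0.
- move=> k; apply: mulr_ge0 => //; apply: exp_coeff_ge0; apply: mulr_ge0 => //; exact: KL_ge0.
- move=> k /=; rewrite normrM (ger0_norm (hf k)).
  apply: le_trans (ler_wpM2l (hf k) (hw k)) _.
  by rewrite /exp_coeff /= exprMn le_eqVlt; apply/orP; left; apply/eqP; ring.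
- have := @is_cvg_seriesZ _ _ M (is_cvg_series_exp_coeff (t * KL R L)).
  by congr (cvgn _).
Qed.

Lemma entry_cvg (t : R) (ht : 0 <= t) (rho : op) c a :
  cvgn (fun n => complex.Re (exp_partial t n rho c a)) /\
  cvgn (fun n => complex.Im (exp_partial t n rho c a)).
Proof.
have hb k : `|complex.Re (iter k (@Lind R L) rho c a)| <= KL R L ^+ k * Nrm rho /\
            `|complex.Im (iter k (@Lind R L) rho c a)| <= KL R L ^+ k * Nrm rho.
  by split; [apply: le_trans (Re_le_n1 _) _ | apply: le_trans (Im_le_n1 _) _];
    apply: le_trans (entry_le _ _ _) (Nrm_iter _ _).
split.
- have -> : (fun n => complex.Re (exp_partial t n rho c a)) =
     series (fun k => t ^+ k / (k`!)%:R * complex.Re (iter k (@Lind R L) rho c a)).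
    apply: funext => n; rewrite /series /= big_mkord /exp_partial Re_sum.
    by apply: eq_bigr => k _; rewrite Re_rM.
  by apply: (series_bound_cvg ht (M := Nrm rho)) => [k|]; [case: (hb k) | exact: Nrm_ge0].
- have -> : (fun n => complex.Im (exp_partial t n rho c a)) =
     series (fun k => t ^+ k / (k`!)%:R * complex.Im (iter k (@Lind R L) rho c a)).
    apply: funext => n; rewrite /series /= big_mkord /exp_partial Im_sum.
    by apply: eq_bigr => k _; rewrite Im_rM.
  by apply: (series_bound_cvg ht (M := Nrm rho)) => [k|]; [case: (hb k) | exact: Nrm_ge0].
Qed.

End Conv.

Local Open Scope classical_set_scope.

Lemma cvg_sumR (R : realType) (I : finType) (g : I -> nat -> R) (l : I -> R) :
  (forall i, g i n @[n --> \oo] --> l i) -> (\sum_i g i n) @[n --> \oo] --> \sum_i l i.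
Proof. by move=> h; apply: (cvg_big add_continuous) => // i _; apply: h. Qed.

Unset Implicit Arguments.
Set Strict Implicit.

Theorem lemma1 (R : realType) (L : nat) (hL : (1 < L)%N)
  (Psi : bool -> bool -> R[i]) (rhoD : Dconfig L -> Dconfig L -> R[i])
  (hrhoD : is_stateD rhoD) (p1 p2 : pauli) (t : R) (ht : 0 <= t) :
  Defs.tro (Defs.mulo (@Pbar R L p1 p2) (Defs.expL t (Defs.rho0 Psi rhoD))) = expect Psi p1 p2.
Proof.
set O := @Pbar R L p1 p2.
set r0 := Defs.rho0 Psi rhoD.
have hE n : (0 < n)%N -> tro (mulo O (exp_partial t n r0)) = expect Psi p1 p2.
  move=> hn; rewrite tro_exp_partial //; last exact: good_Pbar. rewrite /O /r0; apply: tro_Pbar_rho0 hrhoD.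
have hc c a := entry_cvg ht r0 c a.
have eR (X : Defs.op R L) : complex.Re (tro (mulo O X)) =
    \sum_a \sum_c (complex.Re (O a c) * complex.Re (X c a) - complex.Im (O a c) * complex.Im (X c a)).
  rewrite /tro /Defs.mulo Re_sum; apply: eq_bigr => a _; rewrite Re_sum.
  by apply: eq_bigr => c _; rewrite ReM.
have eI (X : Defs.op R L) : complex.Im (tro (mulo O X)) =
    \sum_a \sum_c (complex.Re (O a c) * complex.Im (X c a) + complex.Im (O a c) * complex.Re (X c a)).
  rewrite /tro /Defs.mulo Im_sum; apply: eq_bigr => a _; rewrite Im_sum.
  by apply: eq_bigr => c _; rewrite ImM.
have h1 : (fun n => complex.Re (tro (mulo O (exp_partial t n r0)))) @ \oo -->
          complex.Re (tro (mulo O (expL t r0))).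
  have -> : (fun n => complex.Re (tro (mulo O (exp_partial t n r0)))) =
     (fun n => \sum_a \sum_c (complex.Re (O a c) * complex.Re (exp_partial t n r0 c a)
                 - complex.Im (O a c) * complex.Im (exp_partial t n r0 c a))).
    by apply: funext => n; rewrite eR.
  rewrite eR; apply: cvg_sumR => a; apply: cvg_sumR => c; rewrite /expL /=.
  by apply: cvgB; apply: cvgMl_tmp; [exact: (hc c a).1 | exact: (hc c a).2].
have h2 : (fun n => complex.Re (tro (mulo O (exp_partial t n r0)))) @ \oo -->
          complex.Re (expect Psi p1 p2).
  by apply: cvg_near_cst; exists 1%N => // n /= hn; rewrite hE.
have k1 : (fun n => complex.Im (tro (mulo O (exp_partial t n r0)))) @ \oo -->
          complex.Im (tro (mulo O (expL t r0))).
  have -> : (fun n => complex.Im (tro (mulo O (exp_partial t n r0)))) =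
     (fun n => \sum_a \sum_c (complex.Re (O a c) * complex.Im (exp_partial t n r0 c a)
                 + complex.Im (O a c) * complex.Re (exp_partial t n r0 c a))).
    by apply: funext => n; rewrite eI.
  rewrite eI; apply: cvg_sumR => a; apply: cvg_sumR => c; rewrite /expL /=.
  by apply: cvgD; apply: cvgMl_tmp; [exact: (hc c a).2 | exact: (hc c a).1].
have k2 : (fun n => complex.Im (tro (mulo O (exp_partial t n r0)))) @ \oo -->
          complex.Im (expect Psi p1 p2).
  by apply: cvg_near_cst; exists 1%N => // n /= hn; rewrite hE.
apply/eqP; rewrite eq_complex; apply/andP; split; apply/eqP.
  exact: (cvg_unique _ h1 h2).
exact: (cvg_unique _ k1 k2).
Qed.
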